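(* Let $s(n)=a(F_n)$ for $n\ge 0$. (a) For $n\ge 3$ the Fibonacci representation of $s(n)$ is $(1000)^{\lfloor (n-3)/4\rfloor}x_n$, where $x_n=10$ if $n\equiv 0\pmod 4$, $x_n=101$ if $n\equiv1\pmod4$, $x_n=1001$ if $n\equiv 2\pmod 4$, and $x_n=1$ if $n\equiv 3\pmod 4$; here $(1000)^k$ denotes $k$ concatenated copies of $1000$. (b) $s(n)=s(n-1)+s(n-3)+s(n-4)$ for $n\ge 4$, and for all $n\ge0$ $$s(n)=\frac{L_n}{10}+\frac{F_n}{2}+\begin{cases}-\tfrac15(-1)^{n/2}, & n \text{ even},\\[2pt] \tfrac25(-1)^{(n-1)/2}, & n\text{ odd}.\end{cases}$$
   Context: Let $(F_n)_{n\ge 0}$ be the Fibonacci numbers: $F_0=0$, $F_1=1$, $F_n=F_{n-1}+F_{n-2}$ for $n\ge 2$, and $(L_n)$ the Lucas numbers: $L_0=2$, $L_1=1$, $L_n=L_{n-1}+L_{n-2}$. Define $(a(n))_{n\ge 0}$ (OEIS A105774) by $a(0)=0$, $a(1)=1$, and for $n\ge 2$, $a(n)=F_{j+1}-a(n-F_j)$, where $j\ge 2$ is the unique index with $F_j<n\le F_{j+1}$. The Fibonacci (Zeckendorf) representation of $m\ge1$ is the unique binary string $e_1\cdots e_t$ with $e_1=1$, no two consecutive $1$'s, and $m=\sum_{i=1}^t e_iF_{t-i+2}$. *)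

(* Defs.v *)
From mathcomp Require Import all_boot all_order all_algebra.
Set Implicit Arguments. Unset Strict Implicit. Unset Printing Implicit Defensive.
Import Order.TTheory GRing.Theory Num.Theory.

Fixpoint fib (n : nat) : nat :=
  match n with
  | 0 => 0
  | 1 => 1
  | (m.+1 as p).+1 => fib p + fib m
  end.

Fixpoint lucas (n : nat) : nat :=
  match n with
  | 0 => 2
  | 1 => 1
  | (m.+1 as p).+1 => lucas p + lucas m
  end.

Definition is_A105774 (a : nat -> int) : Prop :=
  [/\ a 0 = 0%R, a 1 = 1%R &
      forall n j, (2 <= n)%N -> (2 <= j)%N -> (fib j < n <= fib j.+1)%N ->
        a n = ((fib j.+1)%:Z - a (n - fib j)%N)%R].

(* Value of a binary string e_1 ... e_t : sum_i e_i F_{t-i+2}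
   (with 0-based index i this is e_i F_{t-i+1}). *)
Definition fib_val (w : seq bool) : nat :=
  \sum_(i < size w) (nth false w i) * fib (size w - i).+1.

Definition is_fib_rep (m : nat) (w : seq bool) : Prop :=
  [/\ nth false w 0 = true,
      (forall i, i.+1 < size w -> ~~ (nth false w i && nth false w i.+1))
    & fib_val w = m].

Definition rep1000 (k : nat) : seq bool :=
  flatten (nseq k [:: true; false; false; false]).

Definition xsuf (n : nat) : seq bool :=
  match n %% 4 with
  | 0 => [:: true; false]
  | 1 => [:: true; false; true]
  | 2 => [:: true; false; false; true]
  | _ => [:: true]
  end.

(* Main.v *)
Require Import Defs.
From mathcomp Require Import all_boot all_order all_algebra.
From mathcomp Require Import zify ring lra.
Import Order.TTheory GRing.Theory Num.Theory.

Fixpoint sval (n : nat) : int :=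
  match n with
  | 0 => 0%R
  | 1 => 1%R
  | (m.+1 as p).+1 => ((fib m.+2)%:Z - sval m)%R
  end.

Lemma fib_pos n : (0 < fib n.+1)%N.
Proof.
elim: n => [|n IH] //=. by rewrite addn_gt0 IH.
Qed.

Lemma s_eq (a : nat -> int) (Ha : is_A105774 a) n : a (fib n) = sval n.
Proof.
case: Ha => H0 H1 H.
suff: a (fib n) = sval n /\ a (fib n.+1) = sval n.+1 by case.
elim: n => [|n [IH1 IH2]]; first by rewrite /= H0 H1.
split => //.
case: n IH1 IH2 => [|n] IH1 IH2.
  by rewrite /= H1 subr0.
have := H (fib n.+3) n.+2.
have hf : fib n.+3 = (fib n.+2 + fib n.+1)%N by [].
have p1 := fib_pos n.
have p2 := fib_pos n.+1.
move=> ->; last 3 first.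
- rewrite hf; lia.
- by [].
- rewrite leqnn andbT hf; lia.
have -> : (fib n.+3 - fib n.+2 = fib n.+1)%N by rewrite hf addKn.
by rewrite IH1.
Qed.

Lemma sval4 m : sval m.+4 = ((fib m.+3)%:Z + sval m)%R.
Proof.
have sv2 k : sval k.+2 = ((fib k.+2)%:Z - sval k)%R by [].
rewrite !sv2.
have -> : fib m.+4 = (fib m.+3 + fib m.+2)%N by [].
rewrite PoszD; ring.
Qed.

Lemma fib_val_cons b w :
  fib_val (b :: w) = (b * fib (size w).+2 + fib_val w)%N.
Proof.
rewrite /fib_val [size (b :: w)]/= big_ord_recl subn0; congr (_ + _)%N.
Qed.

Lemma fib_val_nil : fib_val [::] = 0%N.
Proof. by rewrite /fib_val big_ord0. Qed.

Fixpoint nocons (w : seq bool) : bool :=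
  match w with
  | [::] => true
  | b :: w' => (b ==> ~~ head false w') && nocons w'
  end.

Lemma noconsP w : nocons w ->
  forall i, i.+1 < size w -> ~~ (nth false w i && nth false w i.+1).
Proof.
elim: w => [|b w IH] //= /andP [hb hw] [|i] hi.
  case: w hb hw IH hi => [|c w] //=; by case: b; case: c.
exact: IH.
Qed.

Lemma size_rep k : size (rep1000 k) = (4 * k)%N.
Proof. elim: k => [|k IH] //=; rewrite IH; lia. Qed.

Lemma xsuf_mod k m : xsuf (k * 4 + m) = xsuf m.
Proof. by rewrite /xsuf modnMDl. Qed.

Lemma main_a k r : (r < 4)%N ->
  sval (k * 4 + (r + 3)) = Posz (fib_val (rep1000 k ++ xsuf (r + 3))) /\
  nocons (rep1000 k ++ xsuf (r + 3)) /\
  nth false (rep1000 k ++ xsuf (r + 3)) 0 = true.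
Proof.
move=> hr.
have hx : size (xsuf (r + 3)) = r.+1.
  by case: r hr => [|[|[|[|]]]].
elim: k => [|k [IH1 [IH2 IH3]]].
  case: r hr hx => [|[|[|[|]]]] //= _ _;
  by rewrite !fib_val_cons fib_val_nil.
have -> : (k.+1 * 4 + (r + 3) = (k * 4 + (r + 3)).+4)%N by lia.
rewrite (_ : rep1000 k.+1 ++ _ =
   [:: true, false, false, false & rep1000 k ++ xsuf (r+3)]) //.
split; last by split.
have hs : size (rep1000 k ++ xsuf (r + 3)) = (k*4 + r + 1)%N.
  by rewrite size_cat size_rep hx; lia.
rewrite sval4 IH1 !fib_val_cons !mul0n !add0n mul1n -PoszD [size _]/= hs.
by have -> : ((k*4+r+1).+3.+2 = (k*4+(r+3)).+3)%N by lia.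
Qed.

Lemma lucas_fib n : (lucas n.+2 + lucas n = 5 * fib n.+1)%N.
Proof.
suff: (lucas n.+2 + lucas n = 5 * fib n.+1)%N /\
      (lucas n.+3 + lucas n.+1 = 5 * fib n.+2)%N by case.
elim: n => [|n [IH1 IH2]] //; split => //.
have -> : lucas n.+4 = (lucas n.+3 + lucas n.+2)%N by [].
have -> : fib n.+3 = (fib n.+2 + fib n.+1)%N by [].
have -> : lucas n.+3 = (lucas n.+2 + lucas n.+1)%N by [].
move: IH1 IH2; rewrite /=. lia.
Qed.

Definition esign (n : nat) : rat :=
  (if odd n then 2 / 5 * (-1) ^+ (n.-1)./2 else - (1 / 5) * (-1) ^+ n./2)%R.

Lemma esign2 n : esign n.+2 = (- esign n)%R.
Proof.
rewrite /esign /= negbK.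
case: n => [|n] /=; first by rewrite expr1 expr0; lra.
case: (odd n) => /=; rewrite exprS; lra.
Qed.

Lemma closed n : ((sval n)%:~R : rat) =
  ((lucas n)%:R / 10 + (fib n)%:R / 2 + esign n)%R.
Proof.
suff: ((sval n)%:~R : rat) = ((lucas n)%:R / 10 + (fib n)%:R / 2 + esign n)%R
  /\ ((sval n.+1)%:~R : rat) =
     ((lucas n.+1)%:R / 10 + (fib n.+1)%:R / 2 + esign n.+1)%R by case.
elim: n => [|n [IH1 IH2]].
  by rewrite /esign /= !expr0; split; lra.
split => //.
have E : sval n.+2 = ((fib n.+2)%:Z - sval n)%R by case: n IH1 IH2.
rewrite E esign2 intrB IH1.
have hl : ((lucas n.+2)%:R : rat) = (5 * (fib n.+1)%:R - (lucas n)%:R)%R.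
  by rewrite -(natrM rat 5) -lucas_fib natrD; ring.
have hf : ((fib n.+2)%:R : rat) = ((fib n.+1)%:R + (fib n)%:R)%R.
  by rewrite -natrD.
rewrite hl hf /=.
have -> : (((fib n.+1 + fib n)%:Z)%:~R : rat) = ((fib n.+1)%:R + (fib n)%:R)%R.
  by rewrite -natrD.
lra.
Qed.

Theorem theorem13 (a : nat -> int) (Ha : is_A105774 a) :
  let s := fun n => a (fib n) in
  (forall n, (3 <= n)%N ->
     exists m : nat, s n = Posz m /\
       is_fib_rep m (rep1000 ((n - 3) %/ 4) ++ xsuf n)) /\
  (forall n, (4 <= n)%N -> s n = (s n.-1 + s (n - 3)%N + s (n - 4)%N)%R) /\
  (forall n : nat,
     ((s n)%:~R : rat) =
       ((lucas n)%:R / 10 + (fib n)%:R / 2 +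
        (if odd n then 2 / 5 * (-1) ^+ (n.-1)./2
         else - (1 / 5) * (-1) ^+ n./2))%R).
Proof.
move=> s.
have E : s =1 sval by move=> n; rewrite /s (@s_eq a Ha n).
split; last split.
- move=> n hn; rewrite E.
  have hr : ((n - 3) %% 4 < 4)%N by rewrite ltn_mod.
  have [h1 [h2 h3]] := main_a ((n - 3) %/ 4) _ hr.
  have hn' : ((n - 3) %/ 4 * 4 + ((n - 3) %% 4 + 3))%N = n.
    by rewrite addnA -divn_eq subnK.
  rewrite -[in xsuf n]hn' xsuf_mod.
  rewrite hn' in h1.
  exists (fib_val (rep1000 ((n - 3) %/ 4) ++ xsuf ((n - 3) %% 4 + 3))).
  split => //; split => //.
  exact: noconsP.
- case=> [|[|[|[|m]]]] // _; rewrite !E.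
  have -> : (m.+4 - 3 = m.+1)%N by lia.
  have -> : (m.+4 - 4 = m)%N by lia.
  rewrite sval4 /=; ring.
- move=> n; rewrite E; exact: closed.
Qed.
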